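(* Fix integers $m\ge1$ and $\theta\in(0,1]$, and let $f$ be a homogeneous voting rule. Suppose there exist $\delta>0$ and a neighborhood $U$ of the expected normalized profile $\hat P$ (among normalized continuous profiles on $\{1,\dots,m\}$, with the topology of weight vectors in $\mathbb R^{m!}$) such that $f$ is $\delta$-stable-CM in every continuous profile of $U$. Then $\lim_{n\to\infty}\rho(f,m,n,\theta)=1$.
   Context: A ranking is a strict total order on the candidates. A discrete profile $P$ consists of candidates, a voter set of size $n$ and a ranking $P_v$ per voter; $w(p,P)$ is the number of voters with ranking $p$. A continuous profile consists of candidates, total weight $w(P)>0$ and weights $w(p,P)\ge0$ summing to $w(P)$. The normalized profile $\bar P$ has weights $w(p,P)/w(P)$. A voting rule maps every profile (discrete or continuous) to one of its candidates; homogeneous means $f(P)=f(\bar P)$ for all $P$. For continuous profiles $Q,Q'$ on the same candidates, $d(Q,Q')=\max_p|w(p,Q)-w(p,Q')|$. CM (discrete): $f$ is CM in discrete $P$ if there is a discrete $Q$ with the same candidates and voters, $f(Q)\ne f(P)$, and every voter $v$ with $Q_v\ne P_v$ prefers $f(Q)$ to $f(P)$ according to $P_v$. CM from continuous $P$ to continuous $Q$: $Q$ has the same candidates and total weight as $P$, $f(Q)\ne f(P)$, and every ranking $p$ with $w(p,Q)<w(p,P)$ prefers $f(Q)$ to $f(P)$. $\delta$-stable-CM: $f$ is $\delta$-stable-CM in a continuous profile $P$ if there is a continuous profile $Q$ such that $f$ is CM from $P$ to $Q$ and $f(Q')=f(Q)$ for every continuous profile $Q'$ with $d(Q,Q')<\delta$.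 Perturbed Culture ($m,n\ge1$, $\theta\in(0,1]$): random discrete profile with candidates $\{1,\dots,m\}$, voters $\{1,\dots,n\}$, each voter independently having ranking $1\succ\cdots\succ m$ with probability $\theta$ and a uniformly random ranking with probability $1-\theta$. $\hat P$: total weight $1$, weight $\theta+\frac{1-\theta}{m!}$ on $1\succ\cdots\succ m$ and $\frac{1-\theta}{m!}$ on each other ranking. $\rho(f,m,n,\theta)$: probability that $f$ is CM in the random profile. *)

(* Defs.v *)
From HB Require Import structures.
From mathcomp Require Import all_boot all_order all_algebra all_fingroup.
From mathcomp Require Import all_classical all_reals all_analysis.
Set Implicit Arguments. Unset Strict Implicit. Unset Printing Implicit Defensive.
Import Order.TTheory GRing.Theory Num.Theory.
Local Open Scope ring_scope.

(* Candidates are 'I_m (candidate i of the paper is the ordinal i-1).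
   A ranking is a permutation p of 'I_m, read as: p a is the position of
   candidate a (position 0 = most preferred).  The identity permutation is
   the ranking 1 > 2 > ... > m. *)
Definition ranking (m : nat) := {perm 'I_m}.

Definition prefers (m : nat) (p : ranking m) (a b : 'I_m) : bool :=
  (p a < p b)%N.

Definition cprofile (R : realType) (m : nat) := {ffun ranking m -> R}.

Definition total_weight (R : realType) m (w : cprofile R m) : R :=
  \sum_(p : ranking m) w p.

Definition is_cprofile (R : realType) m (w : cprofile R m) : Prop :=
  (forall p, 0 <= w p) /\ 0 < total_weight w.

Definition normalize (R : realType) m (w : cprofile R m) : cprofile R m :=
  [ffun p => w p / total_weight w].

Definition pdist (R : realType) m (w w' : cprofile R m) : R :=
  \big[Num.max/0]_(p : ranking m) `|w p - w' p|.

Definition dprofile (m n : nat) := {ffun 'I_n -> ranking m}.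

Definition counts (R : realType) m n (P : dprofile m n) : cprofile R m :=
  [ffun p => (#|[set v | P v == p]|)%:R].

Record voting_rule (R : realType) (m : nat) := VotingRule {
  vr_disc : forall n : nat, dprofile m n -> 'I_m;
  vr_cont : cprofile R m -> 'I_m }.

Definition homogeneous (R : realType) m (f : voting_rule R m) : Prop :=
  (forall n (P : dprofile m n), (0 < n)%N ->
      vr_disc f P = vr_cont f (normalize (counts R P))) /\
  (forall w : cprofile R m, is_cprofile w ->
      vr_cont f w = vr_cont f (normalize w)).

Definition CM_disc (R : realType) m (f : voting_rule R m) n (P : dprofile m n)
  : bool :=
  [exists Q : dprofile m n,
     (vr_disc f Q != vr_disc f P) &&
     [forall v : 'I_n, (Q v != P v) ==> prefers (P v) (vr_disc f Q) (vr_disc f P)]].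

Definition CM_cont (R : realType) m (f : voting_rule R m) (P Q : cprofile R m)
  : Prop :=
  is_cprofile P /\ is_cprofile Q /\
  total_weight Q = total_weight P /\
  vr_cont f Q != vr_cont f P /\
  (forall p, Q p < P p -> prefers p (vr_cont f Q) (vr_cont f P)).

Definition stable_CM (R : realType) m (f : voting_rule R m) (delta : R)
  (P : cprofile R m) : Prop :=
  exists Q : cprofile R m, CM_cont f P Q /\
    forall Q' : cprofile R m, is_cprofile Q' -> pdist Q Q' < delta ->
      vr_cont f Q' = vr_cont f Q.

Definition Phat (R : realType) (m : nat) (theta : R) : cprofile R m :=
  [ffun p => theta * (p == 1%g)%:R + (1 - theta) / (m`!)%:R].

Definition pc_prob (R : realType) m n (theta : R) (P : dprofile m n) : R :=
  \prod_(v : 'I_n) (theta * (P v == 1%g)%:R + (1 - theta) / (m`!)%:R).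

Definition rho (R : realType) m (f : voting_rule R m) (n : nat) (theta : R) : R :=
  \sum_(P : dprofile m n) pc_prob theta P * (CM_disc f P)%:R.

(* Main.v *)
Require Import Defs.
From HB Require Import structures.
From mathcomp Require Import all_boot all_order all_algebra all_fingroup.
From mathcomp Require Import all_classical all_reals all_analysis.
From mathcomp Require Import zify ring lra.
Import Order.TTheory GRing.Theory Num.Theory.
Import numFieldNormedType.Exports.
Local Open Scope classical_set_scope.
Local Open Scope ring_scope.

Module Aux.
Local Close Scope classical_set_scope.
Set Implicit Arguments. Unset Strict Implicit. Unset Printing Implicit Defensive.
Local Open Scope nat_scope.

Section Move.
Variables (T : finType) (n : nat).

Definition cnt (P : {ffun 'I_n -> T}) (x : T) : nat := #|[set v | P v == x]|.

Lemma cntE P x : cnt P x = \sum_v (P v == x).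
Proof. by rewrite /cnt -sum1_card big_mkcond /=; apply: eq_bigr => v _; rewrite inE; case: eqP. Qed.

Lemma sum_cnt P : \sum_x cnt P x = n.
Proof.
under eq_bigr do rewrite cntE.
rewrite exchange_big /= -[n in RHS]card_ord -sum1_card.
apply: eq_bigr => v _; rewrite (bigD1 (P v)) //= eqxx big1 ?addn0 // => x /negPf.
by rewrite eq_sym => ->.
Qed.

Lemma eq_of_le (a b : T -> nat) : \sum_x a x = \sum_x b x -> (forall x, a x <= b x) -> forall x, a x = b x.
Proof.
move=> Hs Hle x; apply/eqP; rewrite eqn_leq Hle /=.
have : \sum_y (b y - a y) = 0.
  by rewrite sumnB // Hs subnn.
move/eqP; rewrite sum_nat_eq0 => /forallP /(_ x) /implyP /(_ isT).
by rewrite subn_eq0.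
Qed.

Lemma upd_cnt (P : {ffun 'I_n -> T}) v (p' : T) x :
  cnt [ffun u => if u == v then p' else P u] x + (P v == x) = cnt P x + (p' == x).
Proof.
rewrite !cntE (bigD1 v) //= [in RHS](bigD1 v) //= ffunE eqxx.
under eq_bigr => u /negPf H do rewrite ffunE H.
lia.
Qed.

Lemma move_lemma (P : {ffun 'I_n -> T}) (t : T -> nat) (S : pred T) :
  \sum_x t x = n -> (forall x, ~~ S x -> cnt P x <= t x) ->
  exists Qd : {ffun 'I_n -> T}, (forall x, cnt Qd x = t x) /\
     (forall v, Qd v != P v -> S (P v)).
Proof.
move=> Ht HS.
suff H : forall k (P' : {ffun 'I_n -> T}), \sum_x (cnt P' x - t x) <= k ->
   (forall x, ~~ S x -> cnt P' x <= t x) -> (forall v, P' v != P v -> S (P v)) ->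
  exists Qd : {ffun 'I_n -> T}, (forall x, cnt Qd x = t x) /\
     (forall v, Qd v != P v -> S (P v)).
  by apply: (H _ P (leqnn _)) => // v; rewrite eqxx.
elim=> [|k IH] P' Hk HS' Hv.
  exists P'; split => //; apply: eq_of_le; first by rewrite sum_cnt.
  move=> x; move: Hk; rewrite leqn0 sum_nat_eq0 => /forallP /(_ x) /implyP /(_ isT).
  by rewrite subn_eq0.
have [Hall|] := boolP [forall x, cnt P' x <= t x].
  exists P'; split => //; apply: eq_of_le; first by rewrite sum_cnt.
  by move=> x; move/forallP: Hall.
rewrite negb_forall => /existsP [p]; rewrite -ltnNge => Hp.
have Sp : S p by apply/negPn/negP => /HS'; rewrite leqNgt Hp.
have [p' Hp'] : exists p', cnt P' p' < t p'.
  case: (boolP [exists p', cnt P' p' < t p']) => [/existsP //|]; rewrite negb_exists => /forallP Hn; exfalso.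
  have Heq := @eq_of_le t (cnt P'); rewrite sum_cnt Ht in Heq.
  have := Heq erefl; move=> /(_ _) Hx.
  have : t p = cnt P' p by apply: Hx => x; move: (Hn x); rewrite -leqNgt.
  by move=> E; move: Hp; rewrite E ltnn.
have [v Hv1] : exists v, P' v == p.
  apply/existsP; move: Hp; rewrite /cnt; case: (set_0Vmem [set v | P' v == p]) => [->|[v]].
    by rewrite cards0.
  by rewrite inE => Hv0 _; apply/existsP; exists v.
pose P'' := [ffun u => if u == v then p' else P' u].
have Hc x : cnt P'' x + (P' v == x) = cnt P' x + (p' == x) by apply: upd_cnt.
move/eqP: Hv1 => Hv1; rewrite Hv1 in Hc.
have pp' : p != p' by apply/eqP => E; move: Hp Hp'; rewrite E => H1 H2; move: (ltn_trans H1 H2); rewrite ltnn.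
apply: (IH P'').
- have Hle x : cnt P'' x - t x <= cnt P' x - t x.
    have := Hc x; case: (eqVneq p' x) => [<-|_]; first by rewrite (negPf pp'); move: Hp'; lia.
    case: (p == x) => /=; lia.
  have Hlt : cnt P'' p - t p < cnt P' p - t p.
    have := Hc p; rewrite eqxx eq_sym (negPf pp'); lia.
  have : \sum_x (cnt P'' x - t x) < \sum_x (cnt P' x - t x); last by move: Hk; lia.
  rewrite (bigD1 p) //= [X in _ < X](bigD1 p) //=.
  by rewrite -addSn leq_add // leq_sum.
- move=> x Sx; have := Hc x; have := HS' x Sx.
  case: (eqVneq p' x) => [<- _|_]; first by move: Hp'; lia.
  case: (p == x) => /=; lia.
- move=> u; rewrite ffunE; case: (eqVneq u v) => [->|_]; last exact: Hv.
  move=> Hne.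
  by case: (eqVneq (P' v) (P v)) => [E|/Hv //]; rewrite -E Hv1.
Qed.
End Move.

Local Open Scope ring_scope.

Section Prob.
Variables (R : realFieldType) (T : finType) (q : T -> R) (n : nat).
Hypothesis q0 : forall j, 0 <= q j.
Hypothesis q1 : \sum_j q j = 1.

Lemma fact_gen (h : 'I_n -> T -> R) :
  \sum_(P : {ffun 'I_n -> T}) (\prod_v q (P v)) * (\prod_v h v (P v)) =
  \prod_v \sum_j q j * h v j.
Proof.
rewrite bigA_distr_bigA /=; apply: eq_bigr => P _; by rewrite -big_split.
Qed.

Lemma sum_prob : \sum_(P : {ffun 'I_n -> T}) (\prod_v q (P v)) = 1.
Proof.
transitivity (\prod_(v : 'I_n) \sum_j q j * 1).
  rewrite -(fact_gen (fun _ _ => 1)); apply: eq_bigr => P _; by rewrite big1_eq mulr1.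
by rewrite big1 // => v _; under eq_bigr do rewrite mulr1; exact: q1.
Qed.

Lemma E1 (u : 'I_n) (g : T -> R) :
  \sum_(P : {ffun 'I_n -> T}) (\prod_v q (P v)) * g (P u) = \sum_j q j * g j.
Proof.
transitivity (\prod_v \sum_j q j * (if v == u then g j else 1)).
  rewrite -fact_gen; apply: eq_bigr => P _; congr (_ * _).
  by rewrite (bigD1 u) //= eqxx big1 ?mulr1 // => v /negPf ->.
rewrite (bigD1 u) //= eqxx [X in _ * X = _]big1 ?mulr1 //.
by move=> v /negPf ->; under eq_bigr do rewrite mulr1; exact: q1.
Qed.

Lemma E2 (u w : 'I_n) (g k : T -> R) : u != w ->
  \sum_(P : {ffun 'I_n -> T}) (\prod_v q (P v)) * (g (P u) * k (P w)) =
  (\sum_j q j * g j) * (\sum_j q j * k j).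
Proof.
move=> uw; have wu : w != u by rewrite eq_sym.
transitivity (\prod_v \sum_j q j * (if v == u then g j else if v == w then k j else 1)).
  rewrite -fact_gen; apply: eq_bigr => P _; congr (_ * _).
  rewrite (bigD1 u) //= eqxx (bigD1 w) /=; last exact: wu.
  rewrite (negPf wu) eqxx.
  by rewrite big1 ?mulr1 // => v /andP [/negPf -> /negPf ->].
rewrite (bigD1 u) //= eqxx (bigD1 w) /=; last exact: wu.
rewrite (negPf wu) eqxx.
rewrite [X in _ * (_ * X) = _]big1 ?mulr1 //.
move=> v /andP [/negPf -> /negPf ->]; under eq_bigr do rewrite mulr1; exact: q1.
Qed.

Definition Xf (p : T) (j : T) : R := (j == p)%:R - q p.

Lemma q_le1 p : q p <= 1.
Proof. by rewrite -q1 (bigD1 p) //= lerDl sumr_ge0. Qed.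

Lemma EX p : \sum_j q j * Xf p j = 0.
Proof.
under eq_bigr do rewrite /Xf mulrBr.
rewrite sumrB -big_distrl /= q1 mul1r (bigD1 p) //= eqxx mulr1 big1 ?addr0 ?subrr //.
by move=> j /negPf ->; rewrite mulr0.
Qed.

Lemma EX2 p : \sum_j q j * (Xf p j * Xf p j) <= 1.
Proof.
rewrite -q1; apply: ler_sum => j _; rewrite -[leRHS]mulr1; apply: ler_wpM2l => //.
have := q0 p; have := q_le1 p; rewrite /Xf; case: (j == p) => /=; nra.
Qed.

Definition Yf (p : T) (P : {ffun 'I_n -> T}) : R := \sum_v Xf p (P v).

Lemma second_moment p :
  \sum_(P : {ffun 'I_n -> T}) (\prod_v q (P v)) * (Yf p P ^+ 2) <= n%:R.
Proof.
have -> : \sum_(P : {ffun 'I_n -> T}) (\prod_v q (P v)) * (Yf p P ^+ 2) =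
   \sum_u \sum_w \sum_(P : {ffun 'I_n -> T}) (\prod_v q (P v)) * (Xf p (P u) * Xf p (P w)).
  symmetry; under eq_bigr do rewrite exchange_big /=.
  rewrite exchange_big /=; apply: eq_bigr => P _.
  rewrite /Yf expr2 big_distrl /= big_distrr /=; apply: eq_bigr => u _.
  rewrite big_distrr /= big_distrr /=; apply: eq_bigr => w _.
  by rewrite mulrA.
rewrite -[n in leRHS]card_ord -sumr_const; apply: ler_sum => u _.
rewrite (bigD1 u) //= [X in _ + X]big1 ?addr0; last by move=> w uw; rewrite (E2 (Xf p) (Xf p)) 1?eq_sym // EX mul0r.
by rewrite (E1 u (fun j => Xf p j * Xf p j)) EX2.
Qed.

End Prob.

Section Main.
Variables (R : realType) (m : nat).

Lemma countsE n (P : dprofile m n) p : counts R P p = (cnt P p)%:R.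
Proof. by rewrite ffunE. Qed.

Lemma tw_counts n (P : dprofile m n) : total_weight (counts R P) = n%:R.
Proof. by rewrite /total_weight; under eq_bigr do rewrite countsE; rewrite -natr_sum sum_cnt. Qed.

Lemma normE n (P : dprofile m n) p : normalize (counts R P) p = (cnt P p)%:R / n%:R.
Proof. by rewrite ffunE tw_counts countsE. Qed.

Lemma norm_tw n (P : dprofile m n) : (0 < n)%N -> total_weight (normalize (counts R P)) = 1.
Proof.
move=> n0; rewrite /total_weight; under eq_bigr do rewrite normE.
rewrite -big_distrl /= -natr_sum sum_cnt divff //; by rewrite pnatr_eq0 -lt0n.
Qed.

Lemma norm_is n (P : dprofile m n) : (0 < n)%N -> is_cprofile (normalize (counts R P)).
Proof.
move=> n0; split; last by rewrite norm_tw.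
by move=> p; rewrite normE divr_ge0.
Qed.

Lemma pdist_lt (w w' : cprofile R m) e : 0 < e -> (forall p, `|w p - w' p| < e) -> pdist w w' < e.
Proof. by move=> e0 H; apply: bigmax_lt. Qed.


Lemma good n (theta : R) (f : voting_rule R m) (delta : R) (P : dprofile m n) :
  (0 < n)%N -> homogeneous f -> 0 < delta ->
  #|ranking m|%:R < n%:R * delta ->
  stable_CM f delta (normalize (counts R P)) -> CM_disc f P.
Proof.
move=> n0 [hd _] d0 Kn [Q [[_ [[Q0 _] [tQ [neq pref]]]] stab]].
set w := normalize (counts R P) in tQ neq pref stab.
set K : R := #|ranking m|%:R.
have nR0 : (0 : R) < n%:R by rewrite ltr0n.
have tw1 : total_weight w = 1 by apply: norm_tw.
have sQ : \sum_p Q p = 1 by rewrite -tw1 -tQ.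
have cw p : (cnt P p)%:R = n%:R * w p.
  by rewrite /w normE mulrC divfK // gt_eqF.
have [p0 Hp0] : exists p0, w p0 <= Q p0.
  case: (boolP [exists p, w p <= Q p]) => [/existsP //|]; rewrite negb_exists => /forallP H.
  exfalso; have Hl p : Q p < w p by rewrite ltNge H.
  have : \sum_p Q p < \sum_p w p.
    rewrite (bigD1 1%g) //= [X in _ < X](bigD1 1%g) //=.
    by apply: ltr_leD; [exact: Hl | apply: ler_sum => p _; apply: ltW].
  by rewrite sQ -tw1 ltxx.
pose fl p := Num.truncn (n%:R * Q p).
have flle p : (fl p)%:R <= n%:R * Q p by rewrite truncn_le mulr_ge0.
have flgt p : n%:R * Q p < (fl p)%:R + 1 by rewrite natr1 truncnS_gt.
have A2 : \sum_(p | p != p0) n%:R * Q p = n%:R - n%:R * Q p0.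
  rewrite -big_distrr /=; have := sQ; rewrite (bigD1 p0) //= => H.
  have -> : \sum_(p | p != p0) Q p = 1 - Q p0 by lra.
  by rewrite mulrBr mulr1.
have A1 : (\sum_(p | p != p0) fl p)%:R <= n%:R - n%:R * Q p0.
  by rewrite natr_sum -A2; apply: ler_sum => p _.
have K1 : 1 <= K by rewrite /K ler1n; apply/card_gt0P; exists 1%g.
have A3 : \sum_(p | p != p0) n%:R * Q p - (\sum_(p | p != p0) fl p)%:R <= K.
  rewrite natr_sum -sumrB big_mkcond /= /K -sum1_card natr_sum.
  apply: ler_sum => p _; case: (p != p0) => //=.
  by have := flle p; have := flgt p; lra.
have sle : (\sum_(p | p != p0) fl p <= n)%N.
  rewrite -(ler_nat R); apply: le_trans A1 _; rewrite lerBlDr lerDl mulr_ge0 //.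
pose t p := if p == p0 then (n - \sum_(p' | p' != p0) fl p')%N else fl p.
have st : (\sum_p t p = n)%N.
  rewrite (bigD1 p0) //= (eq_bigr fl) => [|p /negPf pp0]; last by rewrite /t pp0.
  by rewrite /t eqxx subnK.
have tp0 : (t p0)%:R = n%:R - (\sum_(p | p != p0) fl p)%:R :> R.
  by rewrite /t eqxx natrB.
have HS : forall x, ~~ (Q x < w x) -> (cnt P x <= t x)%N.
  move=> x; rewrite -leNgt => Hx; rewrite /t; case: (eqVneq x p0) => [->|xp0].
    rewrite leq_subRL // -(ler_nat R) natrD cw.
    have : n%:R * w p0 <= n%:R * Q p0 by rewrite ler_pM2l.
    by move: A1; lra.
  rewrite truncn_ge_nat; last by rewrite mulr_ge0.
  by rewrite cw ler_pM2l.
have [Qd [cQd chg]] := move_lemma (P := P) (S := fun p => Q p < w p) st HS.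
have normQd p : normalize (counts R Qd) p = (t p)%:R / n%:R by rewrite normE cQd.
have fQd : vr_cont f (normalize (counts R Qd)) = vr_cont f Q.
  apply: stab; first exact: norm_is.
  apply: pdist_lt => // p; rewrite normQd.
  have : `|n%:R * Q p - (t p)%:R| <= K.
    case: (eqVneq p p0) => [->|pp0].
      rewrite tp0 ler_norml; move: A2 A3 K1 A1; lra.
    rewrite /t (negPf pp0) ler_norml; have := flle p; have := flgt p; move: K1; lra.
  move=> HK.
  have -> : Q p - (t p)%:R / n%:R = (n%:R * Q p - (t p)%:R) / n%:R.
    by field; rewrite gt_eqF.
  rewrite normrM normfV (gtr0_norm nR0) ltr_pdivrMr //.
  by move: HK Kn; rewrite /K; lra.
apply/existsP; exists Qd; rewrite (hd _ Qd n0) (hd _ P n0) fQd; apply/andP; split => //.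
by apply/forallP => v; apply/implyP => /chg /pref.
Qed.

End Main.


Section D.
Variables (R : realType) (m : nat) (theta : R).
Hypothesis th : 0 < theta <= 1.
Let q := Phat m theta.

Lemma q0 p : 0 <= q p.
Proof.
rewrite /q ffunE; have fp : (0 : R) < (m`!)%:R by rewrite ltr0n fact_gt0.
apply: addr_ge0; first by rewrite mulr_ge0 //; case/andP: th => /ltW.
apply: divr_ge0; last exact: ltW.
by case/andP: th => ? ?; lra.
Qed.

Lemma q1 : \sum_p q p = 1.
Proof.
rewrite /q; under eq_bigr do rewrite ffunE.
rewrite big_split /= (bigD1 1%g) //= eqxx mulr1 big1 ?addr0; last by move=> p /negPf ->; rewrite mulr0.
rewrite sumr_const /ranking card_Sn -[_ *+ m`!]mulr_natr divfK; first by rewrite addrC subrK.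
by rewrite pnatr_eq0 -lt0n fact_gt0.
Qed.

Lemma pcE n (P : dprofile m n) : pc_prob theta P = \prod_v q (P v).
Proof. by apply: eq_bigr => v _; rewrite /q ffunE. Qed.

Lemma YfE n (P : dprofile m n) p : Yf q p P = (cnt P p)%:R - n%:R * q p.
Proof.
rewrite /Yf /Xf sumrB sumr_const card_ord cntE natr_sum mulr_natl.
done.
Qed.


Lemma bound (f : voting_rule R m) (eps : R) n : (0 < n)%N -> 0 < eps ->
  (forall P : dprofile m n, pdist (normalize (counts R P)) q < eps -> CM_disc f P) ->
  1 - rho f n theta <= #|ranking m|%:R * n%:R / (n%:R * eps) ^+ 2.
Proof.
move=> n0 e0 HG.
have nR0 : (0 : R) < n%:R by rewrite ltr0n.
have ne0 : 0 < (n%:R * eps) ^+ 2 by rewrite exprn_gt0 // mulr_gt0.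
have -> : 1 - rho f n theta =
   \sum_(P : dprofile m n) (\prod_v q (P v)) * (1 - (CM_disc f P)%:R).
  rewrite /rho -{1}(@sum_prob _ _ q n q1) -sumrB; apply: eq_bigr => P _.
  by rewrite pcE mulrBr mulr1.
apply: (@le_trans _ _ (\sum_(P : dprofile m n) (\prod_v q (P v)) *
          \sum_p (Yf q p P ^+ 2 / (n%:R * eps) ^+ 2))).
  apply: ler_sum => P _; apply: ler_wpM2l; first by apply: prodr_ge0 => v _; exact: q0.
  case: (boolP (CM_disc f P)) => HC.
    by rewrite subrr sumr_ge0 // => p _; rewrite divr_ge0 ?sqr_ge0 // ltW.
  rewrite subr0.
  have [p Hp] : exists p, n%:R * eps <= `|Yf q p P|.
    case: (boolP [exists p, n%:R * eps <= `|Yf q p P|]) => [/existsP //|].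
    rewrite negb_exists => /forallP H; exfalso; move/negP: HC; apply; apply: HG.
    apply: pdist_lt => // p; have := H p; rewrite -ltNge YfE normE.
    have -> : (cnt P p)%:R / n%:R - q p = ((cnt P p)%:R - n%:R * q p) / n%:R.
      by field; rewrite gt_eqF.
    by move=> Hlt; rewrite normrM normfV (gtr0_norm nR0) ltr_pdivrMr //; move: Hlt; lra.
  rewrite (bigD1 p) //=.
  have Hs : 0 <= \sum_(i | i != p) Yf q i P ^+ 2 / (n%:R * eps) ^+ 2.
    by rewrite sumr_ge0 // => p' _; rewrite divr_ge0 ?sqr_ge0 // ltW.
  suff : 1 <= Yf q p P ^+ 2 / (n%:R * eps) ^+ 2 by move: Hs; lra.
  rewrite ler_pdivlMr // mul1r -(real_normK (num_real (Yf q p P))).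
  have H0 : 0 <= n%:R * eps by rewrite mulr_ge0 // ltW.
  by rewrite !expr2; apply: ler_pM.
under eq_bigr do rewrite big_distrr /=.
rewrite exchange_big /=.
apply: (@le_trans _ _ (\sum_(p : ranking m) n%:R / (n%:R * eps) ^+ 2)).
  apply: ler_sum => p _.
  under eq_bigr do rewrite mulrA.
  rewrite -big_distrl /=; apply: ler_wpM2r; first by rewrite invr_ge0 ltW.
  exact: (second_moment n q0 q1 p).
by rewrite sumr_const -[_ *+ #|_|]mulr_natl mulrA.
Qed.


Lemma rho_le1 (f : voting_rule R m) n : rho f n theta <= 1.
Proof.
rewrite /rho -[X in _ <= X](@sum_prob _ _ q n q1); apply: ler_sum => P _.
rewrite pcE; apply: ler_piMr; first by apply: prodr_ge0 => v _; exact: q0.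
by case: (CM_disc f P); rewrite ?ler01 ?lexx.
Qed.
End D.

End Aux.
Import Aux.

Theorem lemma4p2 (R : realType) (m : nat) (theta : R) (f : voting_rule R m) :
  (1 <= m)%N -> 0 < theta <= 1 -> homogeneous f ->
  (exists delta : R, 0 < delta /\
     exists eps : R, 0 < eps /\
       forall w : cprofile R m, is_cprofile w -> total_weight w = 1 ->
         pdist w (Phat m theta) < eps -> stable_CM f delta w) ->
  (fun n : nat => rho f n theta) @ \oo --> (1 : R^o).
Proof.
move=> m1 th hom [delta [d0 [eps [e0 Hst]]]].
apply/cvgrPdist_le => e e0'.
set K : R := #|ranking m|%:R.
have K0 : 0 <= K by rewrite /K ler0n.
pose N := (Num.truncn (K / delta)%R + Num.truncn (K / (eps ^+ 2 * e))%R + 1)%N.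
exists N => // n /= Hn.
have n0 : (0 < n)%N by rewrite /N in Hn; lia.
have nR0 : (0 : R) < n%:R by rewrite ltr0n.
have HKd : K / delta < n%:R.
  apply: lt_le_trans (truncnS_gt _) _; rewrite ler_nat; apply: leq_trans Hn; by rewrite /N addn1 ltnS leq_addr.
have HKe : K / (eps ^+ 2 * e) < n%:R.
  apply: lt_le_trans (truncnS_gt _) _; rewrite ler_nat; apply: leq_trans Hn; by rewrite /N addn1 ltnS leq_addl.
have HG : forall P : dprofile m n, pdist (normalize (counts R P)) (Phat m theta) < eps -> CM_disc f P.
  move=> P Hp; apply: (@good R m n 0 f delta P n0 hom d0); last by apply: Hst => //; [exact: norm_is | exact: norm_tw].
  by rewrite -ltr_pdivrMr.
have Hb := @bound R m theta th f eps n n0 e0 HG.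
have Hr := @rho_le1 R m theta th f n.
rewrite ger0_norm ?subr_ge0 //; apply: le_trans Hb _.
have Hk : K < n%:R * (eps ^+ 2 * e) by rewrite -ltr_pdivrMr // mulr_gt0 // exprn_gt0.
rewrite ler_pdivrMr ?exprn_gt0 ?mulr_gt0 //.
rewrite -/K; move: Hk; nra.
Qed.
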